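(* Let $K$ and $L$ be regular languages over a finite alphabet $A$ with syntactic monoids $M$ and $N$, where $|M|=m$ and $|N|=n$, and let $a\in A$. Then the syntactic monoid of the language $KaL=\{\,uav\mid u\in K,\ v\in L\,\}$ has at most $mn(2^{mn}-1)+1$ elements.
   Context: The syntactic congruence of $R\subseteq A^*$ is $u\sim_R v$ iff for all $p,q\in A^*$, $puq\in R\Leftrightarrow pvq\in R$; the syntactic monoid of $R$ is $A^*/{\sim_R}$. *)

(* Defs.v *)
From mathcomp Require Import all_boot.
Set Implicit Arguments. Unset Strict Implicit. Unset Printing Implicit Defensive.

Definition language (A : finType) := seq A -> Prop.

Definition regular (A : finType) (R : language A) : Prop :=
  exists (Q : finType) (q0 : Q) (delta : Q -> A -> Q) (F : pred Q),
    forall w, R w <-> foldl delta q0 w \in F.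

Definition syn_cong (A : finType) (R : language A) (u v : seq A) : Prop :=
  forall p q : seq A, R (p ++ u ++ q) <-> R (p ++ v ++ q).

(* The syntactic monoid A^*/~_R has exactly k elements: there is a surjection
   from A^* onto a k-element set whose fibres are exactly the ~_R classes. *)
Definition syn_monoid_card (A : finType) (R : language A) (k : nat) : Prop :=
  exists f : seq A -> 'I_k,
    (forall i : 'I_k, exists w, f w = i) /\
    (forall u v, f u = f v <-> syn_cong R u v).

Definition marked_concat (A : finType) (K : language A) (a : A) (L : language A)
  : language A :=
  fun w => exists u v, K u /\ L v /\ w = u ++ a :: v.

(* Main.v *)
Require Import Defs.
From mathcomp Require Import all_boot.
From Stdlib Require Import ClassicalDescription.
Set Implicit Arguments. Unset Strict Implicit.

Definition pb (P : Prop) : bool := if excluded_middle_informative P then true else false.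
Lemma pbP (P : Prop) : reflect P (pb P).
Proof. rewrite /pb; case: excluded_middle_informative => H; constructor; done. Qed.

Section Q.
Variables (A : finType) (R : language A).
Lemma sc_refl u : syn_cong R u u. Proof. by []. Qed.
Lemma sc_sym u v : syn_cong R u v -> syn_cong R v u.
Proof. by move=> H p q; split => /H. Qed.
Lemma sc_trans u v w : syn_cong R u v -> syn_cong R v w -> syn_cong R u w.
Proof. by move=> H1 H2 p q; rewrite H1 H2. Qed.

Lemma quot (C : finType) (c : seq A -> C) :
  (forall u v, c u = c v -> syn_cong R u v) ->
  exists k, syn_monoid_card R k /\ k <= #|C|.
Proof.
move=> Hc.
pose Q w x := pb (exists w', c w' = x /\ syn_cong R w' w).
have hP w : exists x, [pick x | Q w x] = Some x /\ Q w x.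
  case: pickP => [x Hx|H]; first by exists x.
  by move: (H (c w)); rewrite /Q; case: pbP => // [[]]; exists w.
pose h w := odflt (c w) [pick x | Q w x].
have hE u v : h u = h v <-> syn_cong R u v.
  split.
  - rewrite /h; have [x [-> /pbP [w1 [E1 S1]]]] := hP u.
    have [y [-> /pbP [w2 [E2 S2]]]] := hP v; move=> /= Exy.
    rewrite Exy -E2 in E1; have S12 := Hc _ _ E1.
    exact: sc_trans (sc_sym S1) (sc_trans S12 S2).
  - move=> Suv; suff E : [pick x | Q u x] = [pick x | Q v x].
      by rewrite /h E; have [x [-> _]] := hP v.
    apply: eq_pick => x.
    rewrite /Q; apply/pbP/pbP => [][w' [E S]]; exists w'; split => //.
      exact: sc_trans S Suv.
    exact: sc_trans S (sc_sym Suv).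
pose H x := pb (exists w, h w = x).
pose T := {x : C | H x}.
have Hw w : H (h w) by apply/pbP; exists w.
exists #|{: T}|; split.
  exists (fun w => enum_rank (exist _ (h w) (Hw w) : T)); split.
    move=> i; case E: (enum_val i) => [x Hx].
    have /pbP [w Ew] := Hx; exists w.
    rewrite -[i]enum_valK E; congr enum_rank; exact: val_inj.
  move=> u v; rewrite -hE; split.
    by move/enum_rank_inj => [].
  by move=> E; congr enum_rank; apply: val_inj.
by rewrite card_sig max_card.
Qed.
End Q.

Lemma split_mid (T : Type) (a : T) p r x y : p ++ r = x ++ a :: y ->
  (exists p2, p = x ++ a :: p2 /\ y = p2 ++ r) \/
  (exists r1, r = r1 ++ a :: y /\ x = p ++ r1).
Proof.
elim: p x => [|b p IH] x /=; first by move=> ->; right; exists x.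
case: x => [|c x] /= [-> E]; first by left; exists p.
case: (IH _ E) => [[p2 [-> ->]]|[r1 [-> ->]]]; [left; exists p2 | right; exists r1]; done.
Qed.

Lemma decomp (A : finType) (K L : language A) (a : A) p w q :
  marked_concat K a L (p ++ w ++ q) <->
  (exists p1 p2, p = p1 ++ a :: p2 /\ K p1 /\ L (p2 ++ w ++ q)) \/
  (exists q1 q2, q = q1 ++ a :: q2 /\ K (p ++ w ++ q1) /\ L q2) \/
  (exists u1 v1, w = u1 ++ a :: v1 /\ K (p ++ u1) /\ L (v1 ++ q)).
Proof.
split.
- move=> [x [y [Kx [Ly E]]]].
  case: (split_mid E) => [[p2 [Ep Ey]]|[r1 [Er Ex]]].
    by left; exists x, p2; subst.
  case: (split_mid Er) => [[w2 [Ew Ey]]|[r2 [Eq Er1]]].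
    by right; right; exists r1, w2; subst.
  by right; left; exists r2, y; subst.
- case=> [[p1 [p2 [-> [K1 L2]]]]|[[q1 [q2 [-> [K1 L2]]]]|[u1 [v1 [-> [K1 L2]]]]]].
  + by exists p1, (p2 ++ w ++ q); split => //; split => //; rewrite -catA.
  + by exists (p ++ w ++ q1), q2; split => //; split => //; rewrite !catA.
  + by exists (p ++ u1), (v1 ++ q); split => //; split => //; rewrite -!catA.
Qed.

Lemma card_setT (T : finType) : #|{: {set T}}| = 2 ^ #|T|.
Proof. by have := card_powerset [set: T]; rewrite powersetT !cardsT. Qed.

Theorem proposition4 (A : finType) (K L : language A) (m n : nat) (a : A) :
  regular K -> regular L ->
  syn_monoid_card K m -> syn_monoid_card L n ->
  exists k : nat,
    syn_monoid_card (marked_concat K a L) k /\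
    k <= m * n * (2 ^ (m * n) - 1) + 1.
Proof.
move=> _ _ [fK [_ HK]] [fL [_ HL]].
pose Rp w (x : 'I_m) (y : 'I_n) := exists p q u1 v1, fK p = x /\ fL q = y /\
   w = u1 ++ a :: v1 /\ K (p ++ u1) /\ L (v1 ++ q).
pose Rs w : {set 'I_m * 'I_n} := [set xy | pb (Rp w xy.1 xy.2)].
have RsE w p q : ((fK p, fL q) \in Rs w) <->
    exists u1 v1, w = u1 ++ a :: v1 /\ K (p ++ u1) /\ L (v1 ++ q).
  rewrite inE; split.
    move/pbP => [p' [q' [u1 [v1 [Ep [Eq [-> [K1 L1]]]]]]]].
    exists u1, v1; split => //; split.
      by move/HK/(_ [::] u1): Ep => /= <-.
    by move/HL/(_ v1 [::]): Eq; rewrite !cats0 => <-.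
  by move=> [u1 [v1 H]]; apply/pbP; exists p, q, u1, v1.
have full u : Rs u = setT -> forall p q, marked_concat K a L (p ++ u ++ q).
  move=> Hu p q; apply/decomp; right; right; apply/RsE.
  by rewrite Hu inE.
have imp u v : syn_cong K u v -> syn_cong L u v -> Rs u = Rs v ->
    forall p q, marked_concat K a L (p ++ u ++ q) -> marked_concat K a L (p ++ v ++ q).
  move=> SK SL ER p q /decomp H; apply/decomp.
  case: H => [[p1 [p2 [E [K1 L2]]]]|[[q1 [q2 [E [K1 L2]]]]| H3]].
  - by left; exists p1, p2; split => //; split => //; apply/(SL p2 q).
  - by right; left; exists q1, q2; split => //; split => //; apply/(SK p q1).
  - by right; right; apply/RsE; rewrite -ER; apply/RsE.
pose C := option ('I_m * 'I_n * {S : {set 'I_m * 'I_n} | S != setT}).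
pose code w : C := omap (fun S => (fK w, fL w, S)) (insub (Rs w)).
have [k [Hk Hkc]] : exists k, syn_monoid_card (marked_concat K a L) k /\ k <= #|{: C}|.
  apply: (@quot A (marked_concat K a L) C code) => u v; rewrite /code.
  case: insubP => [S HS ES|HS]; case: insubP => [S' HS' ES'|HS'] //=.
    move=> [Eu Ev ESS]; subst S'.
    have SK : syn_cong K u v by apply/HK.
    have SL : syn_cong L u v by apply/HL.
    have ER : Rs u = Rs v by rewrite -ES -ES'.
    move=> p q; split; first exact: imp.
    by apply: imp; [exact: sc_sym | exact: sc_sym | done].
  move=> _ p q; move: HS HS'; rewrite !negbK => /eqP Hu /eqP Hv.
  by split=> _; [apply: full | apply: full].
exists k; split => //; apply: (leq_trans Hkc).
rewrite card_option !card_prod !card_ord card_sig.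
rewrite (_ : #|[pred x | x != setT]| = #|predC1 [set: 'I_m * 'I_n]|) //.
by rewrite cardC1 card_setT card_prod !card_ord subn1 addn1.
Qed.
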